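(* Let $V$ be a finite set, $C$ a partition of $V$, $k>0$, and let $G=(V,E)$ be the clique graph of $C$ with edge weight $k$. Then for every nonempty $d\subseteq V$, $\frac{w_d}{v_d}\le f_C(d)$.
   Context: The clique graph of a partition $C$ of $V$ with edge weight $k$ is $G=(V,E)$ with $E(i,j)=k$ if $i$ and $j$ lie in the same block of $C$ (including $i=j$) and $E(i,j)=0$ otherwise. For $d\subseteq V$: $v_d=\sum_{i\in d}\sum_{j\in V}E(i,j)$ and $w_d=\sum_{i,j\in d}E(i,j)$. Further $f_C(d)=\max_{c\in C}\frac{|c\cap d|}{|c|}$. *)

(* Defs.v *)
From mathcomp Require Import all_boot all_order all_algebra.
Set Implicit Arguments. Unset Strict Implicit. Unset Printing Implicit Defensive.
Import Order.TTheory GRing.Theory Num.Theory.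
Local Open Scope ring_scope.

Definition clique_weight (R : numDomainType) (V : finType) (C : {set {set V}})
  (k : R) (i j : V) : R :=
  if [exists c in C, (i \in c) && (j \in c)] then k else 0.

Definition vol (R : numDomainType) (V : finType) (C : {set {set V}}) (k : R)
  (d : {set V}) : R :=
  \sum_(i in d) \sum_(j : V) clique_weight C k i j.

Definition wgt (R : numDomainType) (V : finType) (C : {set {set V}}) (k : R)
  (d : {set V}) : R :=
  \sum_(i in d) \sum_(j in d) clique_weight C k i j.

(* f_C(d) = max_{c in C} |c ∩ d| / |c|  (blocks of a partition are nonempty;
   the max over C uses bottom 0, harmless since all ratios are >= 0) *)
Definition fC (R : realFieldType) (V : finType) (C : {set {set V}})
  (d : {set V}) : R :=
  \big[Num.max/0]_(c in C) (#|c :&: d|%:R / #|c|%:R).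

Arguments clique_weight {R V} C k i j.
Arguments vol {R V} C k d.
Arguments wgt {R V} C k d.
Arguments fC {R V} C d.

(* Main.v *)
Require Import Defs.
From mathcomp Require Import all_boot all_order all_algebra.
Import Order.TTheory GRing.Theory Num.Theory.
Local Open Scope ring_scope.

Lemma cw_eq (R : numDomainType) (V : finType) (C : {set {set V}}) (k : R)
  (hC : partition C [set: V]) i j :
  clique_weight C k i j = if j \in pblock C i then k else 0.
Proof.
case/and3P: hC => /eqP hcov htriv h0.
rewrite /clique_weight.
have Pi : pblock C i \in C by rewrite pblock_mem // hcov inE.
have iP : i \in pblock C i by rewrite mem_pblock hcov inE.
case: ifP => [/existsP [c /and3P [cC ic jc]]|/negbT ne].
  by rewrite (def_pblock htriv cC ic) jc.
case: ifP => // jP; case/negP: ne; apply/existsP; exists (pblock C i).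
by rewrite Pi iP jP.
Qed.

Lemma row_sum (R : numDomainType) (V : finType) (C : {set {set V}}) (k : R)
  (hC : partition C [set: V]) i (A : {pred V}) :
  \sum_(j in A) clique_weight C k i j = #|[predI A & pblock C i]|%:R * k.
Proof.
under eq_bigr do rewrite (@cw_eq _ _ _ k hC).
rewrite -big_mkcondr /= sumr_const mulr_natl.
by congr (_ *+ _); apply: eq_card => x; rewrite !inE.
Qed.

Theorem lemma1 (R : realFieldType) (V : finType) (C : {set {set V}}) (k : R)
  (hC : partition C [set: V]) (hk : 0 < k) (d : {set V}) (hd : d != set0) :
  wgt C k d / vol C k d <= fC C d.
Proof.
have hC' := hC.
case/and3P: hC' => /eqP hcov htriv h0.
have Pi i : pblock C i \in C by rewrite pblock_mem // hcov inE.
have iP i : i \in pblock C i by rewrite mem_pblock hcov inE.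
have cpos i : (0 < #|pblock C i|)%N by apply/card_gt0P; exists i.
have key i : #|[predI d & pblock C i]|%:R <= fC C d * #|pblock C i|%:R :> R.
  have -> : #|[predI d & pblock C i]| = #|pblock C i :&: d|.
    by apply: eq_card => x; rewrite !inE andbC.
  rewrite -ler_pdivrMr ?ltr0n //.
  by rewrite /fC (bigD1 (pblock C i)) //= le_max lexx.
have volp : 0 < vol C k d.
  case/set0Pn: hd => x xd.
  rewrite /vol (bigD1 x) //= ltr_pwDl //.
    rewrite (@row_sum _ _ _ k hC) // mulr_gt0 // ltr0n. apply/card_gt0P. exists x. by rewrite !inE iP.
  by apply: sumr_ge0 => i _; rewrite (@row_sum _ _ _ k hC) // mulr_ge0 // ltW.
rewrite ler_pdivrMr // /wgt /vol mulr_sumr; apply: ler_sum => i _.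
rewrite !(@row_sum _ _ _ k hC) // mulrA ler_pM2r //.
Qed.
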